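(* Let $G$ be a discrete group, and let $I_0(G)^{\rm tw}$ denote the Banach $\ell^1(G)$-bimodule whose underlying space is $I_0(G)$, with left action induced by conjugation, $g\cdot a=e_g*a*e_{g^{-1}}$, and trivial right action $a\cdot g=a$ ($g\in G$). Then the maps $\Theta^n:C^n(\ell^1(G),I_0(G)')\to C^n(\ell^1(G),(I_0(G)^{\rm tw})')$ determined by $(\Theta^n\psi)(e_{g_1},\dots,e_{g_n})=(g_1\cdots g_n)^{-1}\cdot\psi(e_{g_1},\dots,e_{g_n})$ (the action on the right being the left action of $\ell^1(G)$ on the bimodule $I_0(G)'$) form a chain isomorphism of Banach cochain complexes, and hence $H^n(\ell^1(G),I_0(G)')\cong H^n(\ell^1(G),(I_0(G)^{\rm tw})')$ for all $n$. Moreover, with $S=G\setminus\{e\}$ regarded as a left $G$-set via conjugation, $I_0(G)^{\rm tw}\cong\ell^1(S)$ as $\ell^1(G)$-bimodules (with $\ell^1(S)$ carrying the left action induced by conjugation and trivial right action), so $H^n(\ell^1(G),I_0(G)')\cong H^n(\ell^1(G),\ell^1(S)')$ for all $n$.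
   Context: $\ell^1(G)$ is the convolution algebra of the discrete group $G$ with basis $(e_g)$; $I_0(G)$ is the kernel of the augmentation character $e_g\mapsto1$, a bimodule under multiplication. Bounded multilinear maps on $\ell^1(G)$ are determined by their values on basis elements. Hochschild cochains $C^n(A,M)$ are bounded $n$-linear maps $A^n\to M$ with the standard Hochschild coboundary; $M'$ has the adjoint bimodule structure. *)

(* Defs.v *)
From HB Require Import structures.
From mathcomp Require Import all_boot all_order all_algebra.

Set Implicit Arguments.
Unset Strict Implicit.
Unset Printing Implicit Defensive.

Import Order.TTheory GRing.Theory Num.Theory.
Local Open Scope ring_scope.

Section L1Cohomology.

Variables (R : numFieldType) (G : groupType).

(* Finitely supported vectors are dense in l^1(X), so
   bounded (multi)linear maps are determined by their values on them. *)
Definition fsupp_in (X : eqType) (a : X -> R) (s : seq X) : Prop :=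
  forall x, x \notin s -> a x = 0.

Definition finsupp (X : eqType) (a : X -> R) : Prop :=
  exists s : seq X, fsupp_in a s.

(* ||a||_1 <= K   (the sum over any duplicate-free list containing the
   support of a is the l^1 norm of a) *)
Definition normle (X : eqType) (a : X -> R) (K : R) : Prop :=
  exists s : seq X, [/\ uniq s, fsupp_in a s & \sum_(x <- s) `|a x| <= K].

(* A (closed) subspace E of l^1(X), given by its finitely supported
   elements [bm_mem], with the left and right actions of the basis
   elements e_g of l^1(G) (which determine the bounded actions of
   l^1(G)). *)
Record bimod := BiMod {
  bm_ix : eqType;
  bm_mem : (bm_ix -> R) -> Prop;
  bm_lact : G -> (bm_ix -> R) -> (bm_ix -> R);
  bm_ract : G -> (bm_ix -> R) -> (bm_ix -> R)
}.
Arguments bm_mem : clear implicits.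
Arguments bm_lact : clear implicits.
Arguments bm_ract : clear implicits.

(* I_0(G) = ker of the augmentation e_g |-> 1; actions by convolution:
   (e_g * a)(x) = a(g^-1 x),   (a * e_g)(x) = a(x g^-1). *)
Definition I0_mem (a : G -> R) : Prop :=
  finsupp a /\
  (forall s : seq G, uniq s -> fsupp_in a s -> \sum_(x <- s) a x = 0).

Definition I0 : bimod :=
  @BiMod G I0_mem
    (fun g a => fun x => a (g^-1 * x)%g)
    (fun g a => fun x => a (x * g^-1)%g).

Definition I0tw : bimod :=
  @BiMod G I0_mem
    (fun g a => fun x => a (g^-1 * x * g)%g)
    (fun g a => a).

Definition Sset : eqType := {g : G | g != 1%g}.

Definition conjS (g : G) (s : Sset) : Sset := insubd s (g * val s * g^-1)%g.

Definition l1S : bimod :=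
  @BiMod Sset (fun a => finsupp a)
    (fun g a => fun s => a (conjS g^-1 s))
    (fun g a => a).

(* An element of E' is a bounded linear functional on E, represented by
   its values on the (dense) finitely supported part of E. *)
Definition dual_elt (E : bimod) (phi : (bm_ix E -> R) -> R) : Prop :=
  [/\ (forall a b, bm_mem E a -> bm_mem E b ->
         phi (fun x => a x + b x) = phi a + phi b),
      (forall (c : R) a, bm_mem E a -> phi (fun x => c * a x) = c * phi a)
    & exists C : R, forall a K, bm_mem E a -> normle a K -> `|phi a| <= C * K].

(* A cochain psi : seq G -> E'; as an n-cochain only its values on
   sequences of length n matter: psi [:: g1; ..; gn] = psi(e_g1,..,e_gn).
   (Bounded n-linear maps l^1(G)^n -> E' correspond exactly to bounded
   families of such values.) *)
Definition cochain_t (E : bimod) := seq G -> (bm_ix E -> R) -> R.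

Definition cbound (E : bimod) (n : nat) (psi : cochain_t E) (K : R) : Prop :=
  forall gs, size gs = n ->
  forall a L, bm_mem E a -> normle a L -> `|psi gs a| <= K * L.

Definition cochain (E : bimod) (n : nat) (psi : cochain_t E) : Prop :=
  (forall gs, size gs = n -> dual_elt (psi gs)) /\ exists C : R, cbound n psi C.

Definition ceq (E : bimod) (n : nat) (psi chi : cochain_t E) : Prop :=
  forall gs, size gs = n -> forall a, bm_mem E a -> psi gs a = chi gs a.

Definition cadd (E : bimod) (psi chi : cochain_t E) : cochain_t E :=
  fun gs a => psi gs a + chi gs a.
Definition cscale (E : bimod) (c : R) (psi : cochain_t E) : cochain_t E :=
  fun gs a => c * psi gs a.
Definition czero (E : bimod) : cochain_t E := fun _ _ => 0.

(* [g1; ..; gi * g(i+1); ..] (0-indexed position i) *)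
Definition mergeAt (i : nat) (gs : seq G) : seq G :=
  take i gs ++ (nth 1%g gs i * nth 1%g gs i.+1)%g :: drop i.+2 gs.

(* Hochschild coboundary, with the adjoint actions on E':
   (e_g . phi)(a) = phi(a . e_g),  (phi . e_g)(a) = phi(e_g . a).
   (delta psi)(g1,..,g(n+1)) = g1 . psi(g2,..,g(n+1))
       + sum_{i=1}^n (-1)^i psi(.., gi g(i+1), ..)
       + (-1)^(n+1) psi(g1,..,gn) . g(n+1). *)
Definition cobound (E : bimod) (psi : cochain_t E) : cochain_t E :=
  fun gs a =>
    match gs with
    | [::] => 0
    | g1 :: rest =>
        psi rest (bm_ract E g1 a)
        + \sum_(i < size rest) (-1) ^+ i.+1 * psi (mergeAt i gs) a
        + (-1) ^+ (size rest).+1 * psi (take (size rest) gs) (bm_lact E (last g1 rest) a)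
    end.

Definition cocycle (E : bimod) (n : nat) (psi : cochain_t E) : Prop :=
  cochain n psi /\ ceq n.+1 (cobound psi) (@czero E).

Definition coboundary (E : bimod) (n : nat) (psi : cochain_t E) : Prop :=
  match n with
  | 0 => ceq 0 psi (@czero E)
  | m.+1 => exists chi, cochain m chi /\ ceq m.+1 psi (cobound chi)
  end.

(* H^n(l^1(G), E1') and H^n(l^1(G), E2') are isomorphic (as vector
   spaces): a linear map on cocycles, compatible with coboundaries,
   inducing a bijection Z^n/B^n -> Z^n/B^n. *)
Definition Hn_iso (E1 E2 : bimod) (n : nat) : Prop :=
  exists f : cochain_t E1 -> cochain_t E2,
  [/\ forall psi, cocycle n psi -> cocycle n (f psi),
      forall psi chi (c : R), cocycle n psi -> cocycle n chi ->
        ceq n (f (cadd psi (cscale c chi))) (cadd (f psi) (cscale c (f chi))),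
      forall psi, cocycle n psi -> (coboundary n (f psi) <-> coboundary n psi)
    & forall chi, cocycle n chi ->
        exists psi, cocycle n psi /\
          coboundary n (cadd (f psi) (cscale (-1) chi))].

Definition bimod_iso (E1 E2 : bimod) : Prop :=
  exists T : (bm_ix E1 -> R) -> (bm_ix E2 -> R),
  [/\
      (forall a, bm_mem E1 a -> bm_mem E2 (T a)) /\
      (forall a b (c : R), bm_mem E1 a -> bm_mem E1 b ->
        T (fun x => a x + c * b x) = (fun y => T a y + c * T b y)),
      (forall a b, bm_mem E1 a -> bm_mem E1 b -> T a = T b -> a = b) /\
      (forall b, bm_mem E2 b -> exists2 a, bm_mem E1 a & T a = b),
      (exists C : R, forall a K, bm_mem E1 a -> normle a K -> normle (T a) (C * K)) /\
      (exists C : R, forall a K, bm_mem E1 a -> normle (T a) K -> normle a (C * K))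
    & forall g a, bm_mem E1 a ->
        T (bm_lact E1 g a) = bm_lact E2 g (T a) /\
        T (bm_ract E1 g a) = bm_ract E2 g (T a)].

Definition gprod (gs : seq G) : G := foldr (fun g h => g * h)%g 1%g gs.

(* (Theta psi)(e_g1,..,e_gn) = (g1...gn)^-1 . psi(e_g1,..,e_gn), the
   action being the left action of l^1(G) on I_0(G)':
   (h . phi)(a) = phi(a * e_h). *)
Definition Theta (psi : cochain_t I0) : cochain_t I0tw :=
  fun gs a => psi gs (bm_ract I0 (gprod gs)^-1%g a).

End L1Cohomology.

(* Main.v *)
Require Import Defs.
From HB Require Import structures.
From mathcomp Require Import all_boot all_order all_algebra.
From Stdlib Require Import FunctionalExtensionality ClassicalEpsilon.
Import Order.TTheory GRing.Theory Num.Theory.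
Local Open Scope ring_scope.
Lemma sum_supp_eq {R : numFieldType} {X : eqType} {a : X -> R} {s1 s2} :
  uniq s1 -> uniq s2 -> fsupp_in a s1 -> fsupp_in a s2 ->
  \sum_(x <- s1) a x = \sum_(x <- s2) a x.
Proof.
move=> U1 U2 H1 H2.
have h1 : \sum_(x <- s1) a x = \sum_(x <- s1 | x \in s2) a x.
  rewrite [RHS]big_mkcond; apply: eq_bigr => x _.
  case: (boolP (x \in s2)) => [_|]; [reflexivity| exact: H2].
have h2 : \sum_(x <- s2) a x = \sum_(x <- s2 | x \in s1) a x.
  rewrite [RHS]big_mkcond; apply: eq_bigr => x _.
  case: (boolP (x \in s1)) => [_|]; [reflexivity| exact: H1].
rewrite h1 h2 -(big_filter s1) -(big_filter s2).
apply: perm_big; apply: uniq_perm; rewrite ?filter_uniq //.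
by move=> x; rewrite !mem_filter andbC.
Qed.

Lemma fsupp_comp {R : numFieldType} {X : eqType} {a : X -> R} {s} {f h : X -> X} :
  cancel f h -> cancel h f -> fsupp_in a s -> fsupp_in (fun x => a (f x)) (map h s).
Proof. move=> fK hK Hs x Hx; apply: Hs; apply: contra Hx => Hfx; by rewrite -[x]fK map_f. Qed.

Lemma sum_comp {R : numFieldType} {X : eqType} (a : X -> R) s (f h : X -> X) :
  cancel h f -> \sum_(x <- map h s) a (f x) = \sum_(y <- s) a y.
Proof. by move=> hK; rewrite big_map; apply: eq_bigr => y _; rewrite hK. Qed.

Lemma fsupp_undup {R : numFieldType} {X : eqType} {a : X -> R} {s} :
  fsupp_in a s -> fsupp_in a (undup s).
Proof. by move=> H x; rewrite mem_undup; apply: H. Qed.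

Lemma I0_mem_comp {R : numFieldType} {G : groupType} (a : G -> R) (f h : G -> G) :
  cancel f h -> cancel h f -> I0_mem a -> I0_mem (fun x => a (f x)).
Proof.
move=> fK hK [[s Hs] H0]; have Hs' := fsupp_undup Hs.
have U : uniq (map h (undup s)) by rewrite map_inj_uniq ?undup_uniq //; exact: can_inj hK.
split; first by exists (map h (undup s)); apply: fsupp_comp.
move=> t Ut Ht; rewrite (sum_supp_eq Ut U Ht (fsupp_comp fK hK Hs')).
by rewrite sum_comp //; apply: H0; rewrite ?undup_uniq.
Qed.

Lemma finsupp_comp {R : numFieldType} {X : eqType} (a : X -> R) (f h : X -> X) :
  cancel f h -> cancel h f -> finsupp a -> finsupp (fun x => a (f x)).
Proof. by move=> fK hK [s Hs]; exists (map h s); apply: fsupp_comp. Qed.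

Lemma normle_comp {R : numFieldType} {X : eqType} (a : X -> R) K (f h : X -> X) :
  cancel f h -> cancel h f -> normle a K -> normle (fun x => a (f x)) K.
Proof.
move=> fK hK [s [Us Hs Hk]]; exists (map h s); split.
- by rewrite map_inj_uniq //; exact: can_inj hK.
- exact: fsupp_comp.
- by rewrite (sum_comp (fun y => `|a y|)).
Qed.

Lemma rtK {G : groupType} (g : G) : cancel (fun x => x * g^-1)%g (fun x => x * g)%g.
Proof. by move=> x; rewrite mulgVK. Qed.
Lemma rtKV {G : groupType} (g : G) : cancel (fun x => x * g)%g (fun x => x * g^-1)%g.
Proof. by move=> x; rewrite mulgK. Qed.
Lemma ltK {G : groupType} (g : G) : cancel (fun x => g^-1 * x)%g (fun x => g * x)%g.
Proof. by move=> x; rewrite mulVKg. Qed.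
Lemma ltKV {G : groupType} (g : G) : cancel (fun x => g * x)%g (fun x => g^-1 * x)%g.
Proof. by move=> x; rewrite mulKg. Qed.
Lemma cjK {G : groupType} (g : G) : cancel (fun x => g^-1 * x * g)%g (fun x => g * x * g^-1)%g.
Proof. by move=> x; rewrite !mulgA mulgK mulgV mul1g. Qed.
Lemma cjKV {G : groupType} (g : G) : cancel (fun x => g * x * g^-1)%g (fun x => g^-1 * x * g)%g.
Proof. by move=> x; rewrite !mulgA mulgVK mulVg mul1g. Qed.

From mathcomp Require Import zify.

Lemma valconjS {G : groupType} (g : G) (s : Sset G) : val (conjS g s) = (g * val s * g^-1)%g.
Proof.
rewrite /conjS val_insubd; case: ifP => //= /negbT; rewrite negbK => /eqP E.
exfalso; move/eqP: (valP s); apply.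
by rewrite -(cjKV g (val s)) /= E mulg1 mulVg.
Qed.

Lemma conjSK {G : groupType} (g : G) : cancel (conjS g) (conjS g^-1).
Proof. by move=> s; apply: val_inj; rewrite !valconjS invgK !mulgA mulgVK mulVg mul1g. Qed.

Lemma conjSKV {G : groupType} (g : G) : cancel (conjS g^-1) (conjS g).
Proof. by move=> s; apply: val_inj; rewrite !valconjS invgK !mulgA mulgK mulgV mul1g. Qed.

Definition mem_closed {R : numFieldType} {G : groupType} (E : bimod R G) : Prop :=
  forall g a, bm_mem a -> bm_mem (bm_lact (b:=E) g a) /\ bm_mem (bm_ract (b:=E) g a).

Lemma mem_I0 {R : numFieldType} {G : groupType} : mem_closed (I0 R G).
Proof. by move=> g a Ha; split; apply: I0_mem_comp Ha; [exact: ltK|exact: ltKV|exact: rtK|exact: rtKV]. Qed.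

Lemma mem_I0tw {R : numFieldType} {G : groupType} : mem_closed (I0tw R G).
Proof. by move=> g a Ha; split=> //; apply: I0_mem_comp Ha; [exact: cjK|exact: cjKV]. Qed.

Lemma mem_l1S {R : numFieldType} {G : groupType} : mem_closed (l1S R G).
Proof. by move=> g a Ha; split=> //; apply: finsupp_comp Ha; [exact: conjSKV|exact: conjSK]. Qed.

Lemma size_mergeAt {G : groupType} i (gs : seq G) :
  (i < (size gs).-1)%N -> size (mergeAt i gs) = (size gs).-1.
Proof.
move=> Hi; rewrite /mergeAt size_cat /= size_take size_drop.
have -> : (i < size gs)%N by lia.
lia.
Qed.

Lemma cob_ceq {R : numFieldType} {G : groupType} {E : bimod R G} {n} {psi chi : cochain_t E} :
  mem_closed E -> ceq n psi chi -> ceq n.+1 (cobound psi) (cobound chi).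
Proof.
move=> HM Heq [|g1 rest] //= [Hs] a Ha.
congr (_ + _ + _).
- by apply: Heq => //; exact: (HM g1 a Ha).2.
- apply: eq_bigr => i _; congr (_ * _); apply: Heq => //.
  by rewrite size_mergeAt //= -Hs.
- congr (_ * _); apply: Heq; last exact: (HM _ _ Ha).1.
  by rewrite size_take /= ltnSn.
Qed.

Lemma ceq_refl {R : numFieldType} {G : groupType} {E : bimod R G} n (psi : cochain_t E) : ceq n psi psi.
Proof. by []. Qed.
Lemma ceq_sym {R : numFieldType} {G : groupType} {E : bimod R G} {n} {psi chi : cochain_t E} :
  ceq n psi chi -> ceq n chi psi.
Proof. by move=> H gs Hs a Ha; rewrite H. Qed.
Lemma ceq_trans {R : numFieldType} {G : groupType} {E : bimod R G} {n} {chi psi phi : cochain_t E} :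
  ceq n psi chi -> ceq n chi phi -> ceq n psi phi.
Proof. by move=> H1 H2 gs Hs a Ha; rewrite H1 // H2. Qed.

Lemma cobound_czero {R : numFieldType} {G : groupType} {E : bimod R G} gs a :
  cobound (czero (E:=E)) gs a = 0.
Proof.
case: gs => [|g1 rest] //=; rewrite /czero big1 ?mulr0 ?addr0 //.
by move=> i _; rewrite mulr0.
Qed.

Lemma cochain_czero {R : numFieldType} {G : groupType} {E : bimod R G} n : cochain n (czero (E:=E)).
Proof.
split.
- move=> gs _; split.
  + by move=> *; rewrite /czero addr0.
  + by move=> *; rewrite /czero mulr0.
  + by exists 0 => * /=; rewrite /czero /= normr0 mul0r.
- by exists 0 => gs Hs a L Ha Hn; rewrite /czero normr0 mul0r.
Qed.

Record siso {R : numFieldType} {G : groupType} (E1 E2 : bimod R G)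
  (F : cochain_t E1 -> cochain_t E2) (Fi : cochain_t E2 -> cochain_t E1) : Prop := Siso {
 s_coch : forall n psi, cochain n psi -> cochain n (F psi);
 s_cochi : forall n chi, cochain n chi -> cochain n (Fi chi);
 s_ceq : forall {n psi chi}, ceq n psi chi -> ceq n (F psi) (F chi);
 s_ceqi : forall {n psi chi}, ceq n psi chi -> ceq n (Fi psi) (Fi chi);
 s_lin : forall n psi chi c, ceq n (F (cadd psi (cscale c chi))) (cadd (F psi) (cscale c (F chi)));
 s_cob : forall n psi, ceq n.+1 (cobound (F psi)) (F (cobound psi));
 s_K : forall n chi, ceq n (F (Fi chi)) chi;
 s_Ki : forall n psi, ceq n (Fi (F psi)) psi;
 s_0 : forall n, ceq n (F (czero (E:=E1))) (czero (E:=E2));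
 s_m1 : mem_closed E1;
 s_m2 : mem_closed E2 }.
Arguments siso {R G E1 E2} F Fi.
Arguments s_coch {R G E1 E2 F Fi} _.
Arguments s_cochi {R G E1 E2 F Fi} _.
Arguments s_ceq {R G E1 E2 F Fi} _ {n psi chi}.
Arguments s_ceqi {R G E1 E2 F Fi} _ {n psi chi}.
Arguments s_lin {R G E1 E2 F Fi} _.
Arguments s_cob {R G E1 E2 F Fi} _.
Arguments s_K {R G E1 E2 F Fi} _.
Arguments s_Ki {R G E1 E2 F Fi} _.
Arguments s_0 {R G E1 E2 F Fi} _.
Arguments s_m1 {R G E1 E2 F Fi} _.
Arguments s_m2 {R G E1 E2 F Fi} _.

Lemma siso_Fi0 {R : numFieldType} {G : groupType} {E1 E2 : bimod R G} {F : cochain_t E1 -> cochain_t E2} {Fi : cochain_t E2 -> cochain_t E1} {n} :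
  siso F Fi -> ceq n (Fi (czero (E:=E2))) (czero (E:=E1)).
Proof.
move=> S; apply: (ceq_trans (chi := Fi (F (czero (E:=E1))))).
- by apply: (s_ceqi S); apply: ceq_sym; apply: (s_0 S).
- exact: (s_Ki S).
Qed.

Lemma siso_Hn {R : numFieldType} {G : groupType} (E1 E2 : bimod R G) (F : cochain_t E1 -> cochain_t E2) (Fi : cochain_t E2 -> cochain_t E1) n :
  siso F Fi -> Hn_iso E1 E2 n.
Proof.
move=> S; exists F; split.
- move=> psi [Hc Hz]; split; first exact: (s_coch S).
  apply: (ceq_trans (s_cob S _ _)).
  apply: (ceq_trans (s_ceq S Hz)); exact: (s_0 S).
- by move=> psi chi c _ _; apply: (s_lin S).
- move=> psi [Hc Hz]; case: n Hc Hz => [|m] Hc Hz; split.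
  + move=> H; apply: (ceq_trans (ceq_sym (s_Ki S 0 psi))).
    apply: (ceq_trans (s_ceqi S H)); exact: (siso_Fi0 S).
  + move=> H; apply: (ceq_trans (s_ceq S H)); exact: (s_0 S).
  + case=> chi [Hc' Hq]; exists (Fi chi); split; first exact: (s_cochi S).
    apply: (ceq_trans (ceq_sym (s_Ki S _ psi))).
    apply: (ceq_trans (s_ceqi S Hq)).
    apply: (ceq_trans (s_ceqi S (cob_ceq (s_m2 S) (ceq_sym (s_K S m chi))))).
    apply: (ceq_trans (s_ceqi S (s_cob S _ _))).
    exact: (s_Ki S).
  + case=> chi [Hc' Hq]; exists (F chi); split; first exact: (s_coch S).
    apply: (ceq_trans (s_ceq S Hq)); apply: ceq_sym; exact: (s_cob S).
- move=> chi [Hc Hz]; exists (Fi chi); split.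
  + split; first exact: (s_cochi S).
    apply: (ceq_trans (ceq_sym (s_Ki S _ _))).
    apply: (ceq_trans (s_ceqi S (ceq_sym (s_cob S _ _)))).
    apply: (ceq_trans (s_ceqi S (cob_ceq (s_m2 S) (s_K S n chi)))).
    apply: (ceq_trans (s_ceqi S Hz)); exact: (siso_Fi0 S).
  + have Hx : ceq n (cadd (F (Fi chi)) (cscale (-1) chi)) (czero (E:=E2)).
      by move=> gs Hs a Ha; rewrite /cadd /cscale (s_K S n chi) // mulN1r subrr.
    case: n Hc Hz Hx => [|m] Hc Hz Hx //.
    exists (czero (E:=E2)); split; first exact: cochain_czero.
    apply: (ceq_trans Hx) => gs _ a _; by rewrite cobound_czero.
Qed.

Lemma siso_trans {R : numFieldType} {G : groupType} (E1 E2 E3 : bimod R G) (F1 : cochain_t E1 -> cochain_t E2) (Fi1 : cochain_t E2 -> cochain_t E1) (F2 : cochain_t E2 -> cochain_t E3) (Fi2 : cochain_t E3 -> cochain_t E2) :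
  siso F1 Fi1 -> siso F2 Fi2 ->
  siso (fun psi => F2 (F1 psi)) (fun chi => Fi1 (Fi2 chi)).
Proof.
move=> S1 S2; split.
- by move=> n psi H; apply: (s_coch S2); apply: (s_coch S1).
- by move=> n psi H; apply: (s_cochi S1); apply: (s_cochi S2).
- by move=> n psi chi H; apply: (s_ceq S2); apply: (s_ceq S1).
- by move=> n psi chi H; apply: (s_ceqi S1); apply: (s_ceqi S2).
- move=> n psi chi c; apply: (ceq_trans (s_ceq S2 (s_lin S1 n psi chi c))); exact: (s_lin S2).
- move=> n psi; apply: (ceq_trans (s_cob S2 _ _)); apply: (s_ceq S2); exact: (s_cob S1).
- move=> n chi; apply: (ceq_trans (s_ceq S2 (s_K S1 n _))); exact: (s_K S2).
- move=> n psi; apply: (ceq_trans (s_ceqi S1 (s_Ki S2 n _))); exact: (s_Ki S1).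
- move=> n; apply: (ceq_trans (s_ceq S2 (s_0 S1 n))); exact: (s_0 S2).
- exact: (s_m1 S1).
- exact: (s_m2 S2).
Qed.

Lemma cochain_pre {R : numFieldType} {G : groupType} (E1 E2 : bimod R G)
  (L : seq G -> (bm_ix E2 -> R) -> (bm_ix E1 -> R)) (C : R) n (psi : cochain_t E1) :
 (forall gs a, bm_mem a -> bm_mem (L gs a)) ->
 (forall gs a b, bm_mem a -> bm_mem b -> L gs (fun x => a x + b x) = fun x => L gs a x + L gs b x) ->
 (forall gs c a, bm_mem a -> L gs (fun x => c * a x) = fun x => c * L gs a x) ->
 (forall gs a K, bm_mem a -> normle a K -> normle (L gs a) (C * K)) ->
 cochain n psi -> @cochain R G E2 n (fun gs a => psi gs (L gs a)).
Proof.
move=> Lm Ladd Lsc Lb [Hd [D HD]]; split.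
- move=> gs Hs; have [Da Ds [D' HD']] := Hd gs Hs; split.
  + by move=> a b Ha Hb /=; rewrite Ladd //; apply: Da; apply: Lm.
  + by move=> c a Ha; rewrite Lsc //; apply: Ds; apply: Lm.
  + exists (D' * C) => a K Ha Hn; rewrite -mulrA; apply: HD'; [exact: Lm | exact: Lb].
- exists (D * C) => gs Hs a K Ha Hn; rewrite -mulrA; apply: HD => //; [exact: Lm | exact: Lb].
Qed.

Lemma gprod_cons {G : groupType} (g : G) gs : gprod (g :: gs) = (g * gprod gs)%g.
Proof. by []. Qed.

Lemma gprod_merge {G : groupType} i (gs : seq G) :
  (i < (size gs).-1)%N -> gprod (mergeAt i gs) = gprod gs.
Proof.
elim: gs i => [|g gs IH] i //=.
case: i => [|i] Hi.
- move: IH Hi; case: gs => [|h t] _ Hi; first by [].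
  by rewrite /mergeAt /= drop0 mulgA.
- have -> : mergeAt i.+1 (g :: gs) = g :: mergeAt i gs by [].
  by rewrite gprod_cons IH //; lia.
Qed.

Lemma gprod_take_last {G : groupType} (g1 : G) rest :
  (gprod (take (size rest) (g1 :: rest)) * last g1 rest)%g = gprod (g1 :: rest).
Proof.
elim: rest g1 => [|h t IH] g1.
- by rewrite /= /gprod /= mul1g mulg1.
- have -> : take (size (h :: t)) (g1 :: h :: t) = g1 :: take (size t) (h :: t) by [].
  by rewrite gprod_cons -mulgA /= IH.
Qed.

Definition Thinv {R : numFieldType} {G : groupType} (chi : cochain_t (I0tw R G)) : cochain_t (I0 R G) :=
  fun gs a => chi gs (fun x => a (x * (gprod gs)^-1)%g).

Lemma ThK {R : numFieldType} {G : groupType} (psi : cochain_t (I0 R G)) : Thinv (Theta psi) = psi.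
Proof.
apply: functional_extensionality => gs; apply: functional_extensionality => a.
rewrite /Thinv /Theta /=; congr (psi gs); apply: functional_extensionality => x.
by rewrite invgK mulgK.
Qed.

Lemma TK {R : numFieldType} {G : groupType} (chi : cochain_t (I0tw R G)) : Theta (Thinv chi) = chi.
Proof.
apply: functional_extensionality => gs; apply: functional_extensionality => a.
rewrite /Thinv /Theta /=; congr (chi gs); apply: functional_extensionality => x.
by rewrite invgK mulgVK.
Qed.

Lemma Theta_cob {R : numFieldType} {G : groupType} (psi : cochain_t (I0 R G)) gs a :
  cobound (Theta psi) gs a = Theta (cobound psi) gs a.
Proof.
case: gs => [|g1 rest] //.
rewrite /cobound /Theta /=.
congr (_ + _ + _).
- congr (psi rest); apply: functional_extensionality => x /=.
  by rewrite !invgK mulgA mulgVK.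
- apply: eq_bigr => i _; rewrite gprod_merge //.
- congr (_ * psi _ _); apply: functional_extensionality => x /=.
  have E := gprod_take_last g1 rest; rewrite gprod_cons in E.
  by rewrite -E !invgK !mulgA.
Qed.

Lemma Theta_coch {R : numFieldType} {G : groupType} n (psi : cochain_t (I0 R G)) :
  cochain n psi -> cochain n (Theta psi).
Proof.
move=> H.
apply: (@cochain_pre R G (I0 R G) (I0tw R G) (fun gs a => bm_ract (b:=I0 R G) (gprod gs)^-1%g a) 1 n psi) => //.
- by move=> gs a Ha; exact: (mem_I0 _ _ Ha).2.
- by move=> gs a K Ha Hn; rewrite mul1r /=; exact: (@normle_comp R G a K _ _ (rtK (gprod gs)^-1) (rtKV _) Hn).
Qed.

Lemma Thinv_coch {R : numFieldType} {G : groupType} n (chi : cochain_t (I0tw R G)) :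
  cochain n chi -> cochain n (Thinv chi).
Proof.
move=> H.
apply: (@cochain_pre R G (I0tw R G) (I0 R G) (fun gs a => fun x => a (x * (gprod gs)^-1)%g) 1 n chi) => //.
- by move=> gs a Ha; exact: (@I0_mem_comp R G a _ _ (rtK (gprod gs)) (rtKV _) Ha).
- by move=> gs a K Ha Hn; rewrite mul1r; exact: (@normle_comp R G a K _ _ (rtK (gprod gs)) (rtKV _) Hn).
Qed.

Lemma siso_Theta {R : numFieldType} {G : groupType} : siso (@Theta R G) (@Thinv R G).
Proof.
split.
- exact: Theta_coch.
- exact: Thinv_coch.
- by move=> n psi chi H gs Hs a Ha; apply: H => //; exact: (mem_I0 _ _ Ha).2.
- by move=> n psi chi H gs Hs a Ha; apply: H => //; exact: (@I0_mem_comp R G a _ _ (rtK (gprod gs)) (rtKV _) Ha).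
- by [].
- by move=> n psi gs _ a _; exact: Theta_cob.
- by move=> n chi; rewrite TK.
- by move=> n psi; rewrite ThK.
- by [].
- exact: mem_I0.
- exact: mem_I0tw.
Qed.

Definition Tm {R : numFieldType} {G : groupType} (a : G -> R) : Sset G -> R := fun s => a (val s).

Definition l1sum {R : numFieldType} {G : groupType} (b : Sset G -> R) : R :=
  match excluded_middle_informative (finsupp b) with
  | left H => \sum_(s <- undup (proj1_sig (constructive_indefinite_description _ H))) b s
  | right _ => 0
  end.

Lemma l1sumE {R : numFieldType} {G : groupType} {b : Sset G -> R} {t} :
  uniq t -> fsupp_in b t -> l1sum b = \sum_(s <- t) b s.
Proof.
move=> Ut Ht; rewrite /l1sum; case: excluded_middle_informative => [H|H]; last first.
  by exfalso; apply: H; exists t.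
case: constructive_indefinite_description => u Hu /=.
apply: sum_supp_eq; rewrite ?undup_uniq //; exact: fsupp_undup.
Qed.

Definition Tinv {R : numFieldType} {G : groupType} (b : Sset G -> R) : G -> R :=
  fun x => match insub x with Some s => b s | None => - l1sum b end.

Lemma Tinv_val {R : numFieldType} {G : groupType} (b : Sset G -> R) s : Tinv b (val s) = b s.
Proof. by rewrite /Tinv valK. Qed.

Lemma Tinv_1 {R : numFieldType} {G : groupType} (b : Sset G -> R) : Tinv b 1%g = - l1sum b.
Proof. by rewrite /Tinv insubF //= eqxx. Qed.

Lemma TTinv {R : numFieldType} {G : groupType} (b : Sset G -> R) : Tm (Tinv b) = b.
Proof. by apply: functional_extensionality => s; rewrite /Tm Tinv_val. Qed.

Lemma val_notin1 {G : groupType} (t : seq (Sset G)) : (1%g \notin map val t).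
Proof. by apply/mapP => -[s _ E]; move: (valP s); rewrite -E eqxx. Qed.

Lemma uniq_L {G : groupType} {t : seq (Sset G)} : uniq t -> uniq (1%g :: map val t).
Proof. by move=> Ut; rewrite /= val_notin1 map_inj_uniq //; exact: val_inj. Qed.

Lemma Tinv_mem {R : numFieldType} {G : groupType} (b : Sset G -> R) : finsupp b -> I0_mem (Tinv b).
Proof.
move=> [t Ht]; have Ht' := fsupp_undup Ht; have Ut' : uniq (undup t) := undup_uniq t.
have UL := uniq_L Ut'.
have HL : fsupp_in (Tinv b) (1%g :: map val (undup t)).
  move=> x; rewrite inE negb_or => /andP [nx1 nxm].
  rewrite /Tinv; case: insubP => [s _ Ex|]; last by rewrite nx1.
  apply: Ht'; apply: contra nxm => Hs; rewrite -Ex; exact: map_f.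
have sum0 : \sum_(x <- 1%g :: map val (undup t)) Tinv b x = 0.
  rewrite big_cons Tinv_1 big_map (l1sumE Ut' Ht').
  under eq_bigr do rewrite Tinv_val.
  by rewrite addNr.
split; first by exists (1%g :: map val (undup t)).
by move=> u Uu Hu; rewrite (sum_supp_eq Uu UL Hu HL).
Qed.

Lemma Tinj {R : numFieldType} {G : groupType} (a a' : G -> R) :
  I0_mem a -> I0_mem a' -> Tm a = Tm a' -> a = a'.
Proof.
move=> [[s Hs] H0] [[s' Hs'] H0'] E; apply: functional_extensionality => x.
case: (eqVneq x 1%g) => [->|nx]; last first.
  by have := congr1 (fun f => f (exist _ x nx : Sset G)) E.
have UL : uniq (undup (1%g :: s ++ s')) := undup_uniq _.
have HL : fsupp_in a (undup (1%g :: s ++ s')).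
  move=> y; rewrite mem_undup inE mem_cat negb_or => /andP [_]; rewrite negb_or => /andP [ys _].
  exact: Hs.
have HL' : fsupp_in a' (undup (1%g :: s ++ s')).
  move=> y; rewrite mem_undup inE mem_cat negb_or => /andP [_]; rewrite negb_or => /andP [_ ys].
  exact: Hs'.
have h1 : 1%g \in undup (1%g :: s ++ s') by rewrite mem_undup inE eqxx.
have e := H0 _ UL HL; have e' := H0' _ UL HL'.
rewrite (bigD1_seq 1%g) //= in e; rewrite (bigD1_seq 1%g) //= in e'.
have Eo : \sum_(y <- undup (1%g :: s ++ s') | y != 1%g) a y
        = \sum_(y <- undup (1%g :: s ++ s') | y != 1%g) a' y.
  apply: eq_bigr => y ny.
  by have := congr1 (fun f => f (exist _ y ny : Sset G)) E.
apply: (addIr (\sum_(y <- undup (1%g :: s ++ s') | y != 1%g) a y)).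
by rewrite e Eo e'.
Qed.

Lemma Tm_fsupp {R : numFieldType} {G : groupType} (a : G -> R) s :
  fsupp_in a s -> fsupp_in (Tm a) (pmap insub s).
Proof. by move=> Hs y; rewrite mem_pmap_sub; exact: Hs. Qed.

Lemma Tm_finsupp {R : numFieldType} {G : groupType} (a : G -> R) : I0_mem a -> finsupp (Tm a).
Proof. by move=> [[s Hs] _]; exists (pmap insub s); exact: Tm_fsupp. Qed.

Lemma TinvT {R : numFieldType} {G : groupType} (a : G -> R) : I0_mem a -> Tinv (Tm a) = a.
Proof.
move=> Ha; apply: Tinj => //; last exact: TTinv.
by apply: Tinv_mem; apply: Tm_finsupp.
Qed.

Lemma Tm_normle {R : numFieldType} {G : groupType} (a : G -> R) K : normle a K -> normle (Tm a) K.
Proof.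
move=> [s [Us Hs Hk]]; exists (pmap insub s); split.
- exact: pmap_sub_uniq.
- exact: Tm_fsupp.
- apply: le_trans Hk.
  rewrite /Tm -(big_map val xpredT (fun x => `|a x|)) (pmap_filter (@insubK _ _ (Sset G))).
  rewrite big_filter big_mkcond /=; apply: ler_sum => x _.
  by case: (insub x) => //= _; rewrite normr_ge0.
Qed.

Lemma Tm_normle_inv {R : numFieldType} {G : groupType} (a : G -> R) K :
  I0_mem a -> normle (Tm a) K -> normle a ((1 + 1) * K).
Proof.
move=> [_ H0] [t [Ut Ht Hk]].
have UL := uniq_L Ut.
have HL : fsupp_in a (1%g :: map val t).
  move=> x; rewrite inE negb_or => /andP [nx1 nxm].
  have -> : x = val (exist _ x nx1 : Sset G) by [].
  apply: Ht; apply: contra nxm => H.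
  by have := map_f val H.
have s0 := H0 _ UL HL; rewrite big_cons big_map in s0.
exists (1%g :: map val t); split => //.
rewrite big_cons big_map.
have e1 : a 1%g = - \sum_(j <- t) a (val j) by apply/eqP; rewrite -addr_eq0 s0.
rewrite e1 normrN mulrDl mul1r; apply: lerD.
- by apply: le_trans Hk; exact: ler_norm_sum.
- exact: Hk.
Qed.

Lemma Tm_lact {R : numFieldType} {G : groupType} (g : G) (a : G -> R) :
  Tm (bm_lact (b:=I0tw R G) g a) = bm_lact (b:=l1S R G) g (Tm a).
Proof.
apply: functional_extensionality => s.
by rewrite /Tm /= valconjS invgK.
Qed.

Lemma iso_tw_S {R : numFieldType} {G : groupType} : bimod_iso (I0tw R G) (l1S R G).
Proof.
exists Tm; split.
- split; first exact: Tm_finsupp.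
  by [].
- split; first by move=> a b Ha Hb; exact: Tinj.
  by move=> b Hb; exists (Tinv b); [exact: Tinv_mem | exact: TTinv].
- split.
  + by exists 1 => a K _ Hn; rewrite mul1r; exact: Tm_normle.
  + by exists (1 + 1) => a K Ha Hn; exact: Tm_normle_inv.
- by move=> g a Ha; split; [exact: Tm_lact|].
Qed.

Lemma fsupp_cat_l {R : numFieldType} {X : eqType} {b : X -> R} {t1 t2} :
  fsupp_in b t1 -> fsupp_in b (undup (t1 ++ t2)).
Proof. by move=> H y; rewrite mem_undup mem_cat negb_or => /andP [h _]; exact: H. Qed.
Lemma fsupp_cat_r {R : numFieldType} {X : eqType} {b : X -> R} {t1 t2} :
  fsupp_in b t2 -> fsupp_in b (undup (t1 ++ t2)).
Proof. by move=> H y; rewrite mem_undup mem_cat negb_or => /andP [_ h]; exact: H. Qed.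

Lemma l1sum_add {R : numFieldType} {G : groupType} (b1 b2 : Sset G -> R) :
  finsupp b1 -> finsupp b2 -> l1sum (fun x => b1 x + b2 x) = l1sum b1 + l1sum b2.
Proof.
move=> [t1 H1] [t2 H2].
have F1 : fsupp_in b1 (undup (t1 ++ t2)) := fsupp_cat_l H1.
have F2 : fsupp_in b2 (undup (t1 ++ t2)) := fsupp_cat_r H2.
have F12 : fsupp_in (fun x => b1 x + b2 x) (undup (t1 ++ t2)).
  by move=> y Hy; rewrite F1 // F2 // addr0.
by rewrite (l1sumE (undup_uniq _) F12) (l1sumE (undup_uniq _) F1) (l1sumE (undup_uniq _) F2) big_split.
Qed.

Lemma l1sum_scale {R : numFieldType} {G : groupType} (c : R) (b : Sset G -> R) :
  finsupp b -> l1sum (fun x => c * b x) = c * l1sum b.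
Proof.
move=> [t H]; have F := fsupp_undup H.
have Fc : fsupp_in (fun x => c * b x) (undup t) by move=> y Hy; rewrite F // mulr0.
by rewrite (l1sumE (undup_uniq _) Fc) (l1sumE (undup_uniq _) F) mulr_sumr.
Qed.

Lemma Tinv_add {R : numFieldType} {G : groupType} (b1 b2 : Sset G -> R) :
  finsupp b1 -> finsupp b2 -> Tinv (fun x => b1 x + b2 x) = fun x => Tinv b1 x + Tinv b2 x.
Proof.
move=> H1 H2; apply: functional_extensionality => x; rewrite /Tinv.
by case: (insub x) => [s|] //; rewrite l1sum_add // opprD.
Qed.

Lemma Tinv_scale {R : numFieldType} {G : groupType} (c : R) (b : Sset G -> R) :
  finsupp b -> Tinv (fun x => c * b x) = fun x => c * Tinv b x.
Proof.
move=> H; apply: functional_extensionality => x; rewrite /Tinv.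
by case: (insub x) => [s|] //; rewrite l1sum_scale // mulrN.
Qed.

Lemma Tinv_lact {R : numFieldType} {G : groupType} (g : G) (b : Sset G -> R) : finsupp b ->
  Tinv (bm_lact (b:=l1S R G) g b) = bm_lact (b:=I0tw R G) g (Tinv b).
Proof.
move=> Hb; apply: Tinj.
- by apply: Tinv_mem; exact: (@mem_l1S R G g b Hb).1.
- exact: (@mem_I0tw R G g (Tinv b) (Tinv_mem _ Hb)).1.
- by rewrite TTinv Tm_lact TTinv.
Qed.

Definition Fl {R : numFieldType} {G : groupType} (chi : cochain_t (I0tw R G)) : cochain_t (l1S R G) :=
  fun gs b => chi gs (Tinv b).
Definition Fli {R : numFieldType} {G : groupType} (phi : cochain_t (l1S R G)) : cochain_t (I0tw R G) :=
  fun gs a => phi gs (Tm a).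

Lemma siso_l1S {R : numFieldType} {G : groupType} : siso (@Fl R G) (@Fli R G).
Proof.
split.
- move=> n chi H.
  apply: (@cochain_pre R G (I0tw R G) (l1S R G) (fun gs b => Tinv b) (1 + 1) n chi) => //.
  + by move=> gs b Hb; exact: Tinv_mem.
  + by move=> gs a b Ha Hb; exact: Tinv_add.
  + by move=> gs c a Ha; exact: Tinv_scale.
  + move=> gs b K Hb Hn; apply: Tm_normle_inv; first exact: Tinv_mem.
    by rewrite TTinv.
- move=> n phi H.
  apply: (@cochain_pre R G (l1S R G) (I0tw R G) (fun gs a => Tm a) 1 n phi) => //.
  + by move=> gs a Ha; exact: Tm_finsupp.
  + by move=> gs a K Ha Hn; rewrite mul1r; exact: Tm_normle.
- by move=> n psi chi H gs Hs b Hb; apply: H => //; exact: Tinv_mem.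
- by move=> n psi chi H gs Hs a Ha; apply: H => //; exact: Tm_finsupp.
- by [].
- move=> n chi [|g1 rest] // _ b Hb.
  by rewrite /Fl /cobound (Tinv_lact _ _ Hb).
- by move=> n phi gs _ b _; rewrite /Fl /Fli TTinv.
- by move=> n chi gs _ a Ha; rewrite /Fl /Fli TinvT.
- by [].
- exact: mem_I0tw.
- exact: mem_l1S.
Qed.

Theorem mainTheorem4 (R : numFieldType) (G : groupType) :
  (* Theta is a chain isomorphism of Banach cochain complexes *)
  [/\ (forall n : nat,
         [/\ forall psi : cochain_t (I0 R G), cochain n psi -> cochain n (Theta psi),
             forall (psi chi : cochain_t (I0 R G)) (c : R),
               Theta (cadd psi (cscale c chi))
               = cadd (Theta psi) (cscale c (Theta chi)),
             forall psi chi : cochain_t (I0 R G), cochain n psi -> cochain n chi ->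
               ceq n (Theta psi) (Theta chi) -> ceq n psi chi,
             forall chi, @cochain R G (I0tw R G) n chi ->
               exists psi : cochain_t (I0 R G), cochain n psi /\ ceq n (Theta psi) chi
           & exists C : R, forall (psi : cochain_t (I0 R G)) (K : R), cochain n psi ->
               (cbound n psi K -> cbound n (Theta psi) (C * K)) /\
               (cbound n (Theta psi) K -> cbound n psi (C * K))]),
      (forall (n : nat) (psi : cochain_t (I0 R G)), cochain n psi ->
         ceq n.+1 (cobound (Theta psi)) (Theta (cobound psi))),
      (* hence H^n(l^1 G, I_0(G)') ~= H^n(l^1 G, (I_0(G)^tw)') *)
      (forall n : nat, Hn_iso (I0 R G) (I0tw R G) n),
      (* I_0(G)^tw ~= l^1(S) as l^1(G)-bimodules *)
      bimod_iso (I0tw R G) (l1S R G)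
    & (* hence H^n(l^1 G, I_0(G)') ~= H^n(l^1 G, l^1(S)') *)
      (forall n : nat, Hn_iso (I0 R G) (l1S R G) n)].
Proof.
split.
- move=> n; split.
  + exact: Theta_coch.
  + by [].
  + move=> psi chi _ _ H gs Hs a Ha.
    rewrite -(ThK psi) -(ThK chi) /Thinv; apply: H => //.
    exact: (@I0_mem_comp R G a _ _ (rtK (gprod gs)) (rtKV _) Ha).
  + move=> chi Hc; exists (Thinv chi); split; first exact: Thinv_coch.
    by rewrite TK.
  + exists 1 => psi K _; split.
    * move=> H gs Hs a L Ha Hn; rewrite mul1r; apply: H => //.
      - exact: (mem_I0 _ _ Ha).2.
      - exact: (@normle_comp R G a L _ _ (rtK (gprod gs)^-1) (rtKV _) Hn).
    * move=> H gs Hs a L Ha Hn; rewrite mul1r -(ThK psi) /Thinv; apply: H => //.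
      - exact: (@I0_mem_comp R G a _ _ (rtK (gprod gs)) (rtKV _) Ha).
      - exact: (@normle_comp R G a L _ _ (rtK (gprod gs)) (rtKV _) Hn).
- by move=> n psi _; exact: (s_cob siso_Theta).
- by move=> n; exact: (@siso_Hn R G _ _ _ _ n siso_Theta).
- exact: iso_tw_S.
- by move=> n; exact: (@siso_Hn R G _ _ _ _ n (@siso_trans R G _ _ _ _ _ _ _ siso_Theta siso_l1S)).
Qed.
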